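(* Let $G$ be a finite abelian group of order coprime to $p$ and $\bar a=(a_1,\ldots,a_t)\in(\mathcal F(G,K))^t$, and let $\mathcal H\subseteq G^\vee$ be the set of $\bar a$-harmonic characters (a set stable under $g^\vee\mapsto(g^\vee)^q$). (a) There is a bijection between the set of traces $\mathrm{Tr}(g^\vee)\in\mathcal F(G,K)$, $g^\vee\in\mathcal H$, and the set of orbits of the cyclic group generated by $D_q:g^\vee\mapsto(g^\vee)^q$ acting on $\mathcal H$. (b) If $g_1^\vee,\ldots,g_m^\vee$ is a set of representatives of these orbits, then $$\ker(\Delta_{\bar a})=\bigoplus_{i=1}^m\big(\mathrm{Tr}(g_i^\vee)\big)\subseteq\mathcal F(G,K)$$ is a decomposition into an orthogonal direct sum of convolution ideals, where $(h)$ denotes the convolution ideal of $\mathcal F(G,K)$ generated by $h$. (c) For every $g^\vee\in G^\vee$ one has $$g^\vee=\frac1{|G|}\sum_{g\in G}g^\vee(-g)\,h_g,\qquad h_g(x)=\mathrm{Tr}(g^\vee)(g+x).$$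
   Context: $K=\mathrm{GF}(q)$, $q=p^r$, $\bar K$ an algebraic closure. $G$ is written additively; $\mathcal F(G,F)$ is the ring of functions $G\to F$ with convolution $(f*a)(g)=\sum_hf(h)a(g-h)$; $\Delta_af=f*a$, $\ker(\Delta_{\bar a})=\{f\in\mathcal F(G,K):f*a_j=0\ \forall j\}$. $G^\vee$ is the group of homomorphisms $G\to\bar K^\times$; $g^\vee$ is $\bar a$-harmonic if $g^\vee*a_j=0$ for all $j$. For $f\in\mathcal F(G,\bar K)$, let $\mathrm{GF}(q^{r(f)})$ be the smallest subfield of $\bar K$ containing $K$ and $f(G)$, and $\mathrm{Tr}(f)=f+f^q+\cdots+f^{q^{r(f)-1}}$ (pointwise powers). Orthogonality refers to $\langle f_1,f_2\rangle_1=\frac1{|G|}\sum_gf_1(g)f_2(-g)$. *)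

(* Defs.v *)
From HB Require Import structures.
From mathcomp Require Import all_boot all_order all_algebra all_field.
From Stdlib Require Import ClassicalDescription.
Set Implicit Arguments. Unset Strict Implicit. Unset Printing Implicit Defensive.
Import Order.TTheory GRing.Theory.
Local Open Scope ring_scope.

Definition conv (G : finZmodType) (R : comNzRingType) (f a : {ffun G -> R})
  : {ffun G -> R} := [ffun g => \sum_(h : G) f h * a (g - h)].

Definition in_ker (G : finZmodType) (K : fieldType) (t : nat)
  (a : 'I_t -> {ffun G -> K}) (f : {ffun G -> K}) : Prop :=
  forall j, conv f (a j) = 0.

Definition is_character (G : finZmodType) (L : fieldType) (chi : {ffun G -> L})
  : Prop := (forall x, chi x != 0) /\ (forall x y, chi (x + y) = chi x * chi y).

Definition embedF (G : finZmodType) (K L : fieldType) (iota : {rmorphism K -> L})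
  (f : {ffun G -> K}) : {ffun G -> L} := [ffun g => iota (f g)].

Definition harmonic (G : finZmodType) (K L : fieldType) (iota : {rmorphism K -> L})
  (t : nat) (a : 'I_t -> {ffun G -> K}) (chi : {ffun G -> L}) : Prop :=
  is_character chi /\ forall j, conv chi (embedF iota (a j)) = 0.

Definition fpow (G : finZmodType) (L : fieldType) (n : nat) (f : {ffun G -> L})
  : {ffun G -> L} := [ffun g => f g ^+ n].

(* GF(q^r) inside Kbar is {x | x^(q^r) = x}; r(f) is the least r >= 1 with
   f(G) contained in GF(q^r) (0 if there is none, which cannot happen in an
   algebraic closure of GF(q)). *)
Definition rdeg_pred (G : finZmodType) (L : fieldType) (q : nat)
  (f : {ffun G -> L}) : pred nat := fun r => (0 < r)%N && (fpow (q ^ r) f == f).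

Definition rdeg (G : finZmodType) (L : fieldType) (q : nat) (f : {ffun G -> L}) : nat :=
  match excluded_middle_informative (exists r, rdeg_pred q f r) with
  | left e => ex_minn e
  | right _ => 0%N
  end.

Definition Tr (G : finZmodType) (L : fieldType) (q : nat) (f : {ffun G -> L})
  : {ffun G -> L} := \sum_(i < rdeg q f) fpow (q ^ i) f.

(* the K-valued function whose image under iota is F (when F takes values in K) *)
Definition descend (G : finZmodType) (K : finFieldType) (L : fieldType)
  (iota : {rmorphism K -> L}) (F : {ffun G -> L}) : {ffun G -> K} :=
  [ffun g => odflt 0 [pick k : K | iota k == F g]].

Definition same_orbit (G : finZmodType) (L : fieldType) (q : nat)
  (chi1 chi2 : {ffun G -> L}) : Prop := exists k : nat, chi2 = fpow (q ^ k) chi1.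

Definition in_ideal (G : finZmodType) (K : fieldType) (h f : {ffun G -> K}) : Prop :=
  exists u : {ffun G -> K}, f = conv h u.

Definition form1 (G : finZmodType) (K : fieldType) (f1 f2 : {ffun G -> K}) : K :=
  (#|G|%:R)^-1 * \sum_(g : G) f1 g * f2 (- g).

(* Main.v *)
Require Import Defs.
From HB Require Import structures.
From mathcomp Require Import all_boot all_order all_algebra all_field.
From mathcomp Require cyclic.
From Stdlib Require Import Classical ClassicalDescription.
From mathcomp Require Import ring.
Import GRing.Theory.
Local Open Scope ring_scope.
Set Implicit Arguments. Unset Strict Implicit. Unset Printing Implicit Defensive.

Section Hat.
Variables (G : finZmodType) (L : fieldType).
Implicit Types (f u v d chi psi : {ffun G -> L}).

Definition hat f psi : L := \sum_(k : G) f k * psi (- k).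
Definition Tg (g : G) v : {ffun G -> L} := [ffun x => v (x - g)].
Definition sc (c : L) v : {ffun G -> L} := [ffun x => c * v x].

Lemma char0 psi : is_character psi -> psi 0 = 1.
Proof.
case=> nz m; have := m 0 0; rewrite addr0 => h.
by apply: (mulfI (nz 0)); rewrite -h mulr1.
Qed.

Lemma charN psi x : is_character psi -> psi (- x) * psi x = 1.
Proof. by move=> c; rewrite -c.2 addNr char0. Qed.

Lemma convE (R : comNzRingType) (f a : {ffun G -> R}) g :
  conv f a g = \sum_(h : G) f h * a (g - h).
Proof. by rewrite ffunE. Qed.

Lemma convC (R : comNzRingType) (f a : {ffun G -> R}) : conv f a = conv a f.
Proof.
apply/ffunP=> g; rewrite !convE (reindex_inj (can_inj (subKr g))) /=.
by apply: eq_bigr=> h _; rewrite subKr mulrC.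
Qed.

Lemma conv_char f psi : is_character psi ->
  conv f psi = [ffun g => psi g * hat f psi].
Proof.
move=> c; apply/ffunP=> g; rewrite convE ffunE /hat mulr_sumr.
by apply: eq_bigr=> h _; rewrite c.2 mulrCA.
Qed.

Lemma hat_conv f u psi : is_character psi ->
  hat (conv f u) psi = hat f psi * hat u psi.
Proof.
move=> c; rewrite /hat mulr_suml.
under eq_bigr do rewrite convE mulr_suml.
rewrite exchange_big /=; apply: eq_bigr=> h _.
rewrite (reindex_inj (addIr h)) /= mulr_sumr; apply: eq_bigr=> k _.
rewrite addrK opprD c.2; ring.
Qed.

Lemma hat_sum (I : Type) (r : seq I) (P : pred I) (F : I -> {ffun G -> L}) psi :
  hat (\sum_(i <- r | P i) F i) psi = \sum_(i <- r | P i) hat (F i) psi.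
Proof.
rewrite /hat; under eq_bigr do rewrite sum_ffunE mulr_suml.
by rewrite exchange_big.
Qed.

Lemma hat_lin (c : L) f u psi : hat (sc c f + u) psi = c * hat f psi + hat u psi.
Proof.
rewrite /hat mulr_sumr -big_split /=; apply: eq_bigr=> k _.
by rewrite !ffunE mulrDl mulrA.
Qed.

Lemma hatZ (c : L) f psi : hat (sc c f) psi = c * hat f psi.
Proof. by rewrite /hat mulr_sumr; apply: eq_bigr=> k _; rewrite ffunE mulrA. Qed.

Lemma hatB f u psi : hat (f - u) psi = hat f psi - hat u psi.
Proof.
rewrite /hat -sumrB; apply: eq_bigr=> k _; by rewrite !ffunE mulrBl.
Qed.

Lemma hat0 psi : hat 0 psi = 0.
Proof. by rewrite /hat big1 // => k _; rewrite ffunE mul0r. Qed.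

Lemma hat_char chi psi : is_character chi -> is_character psi ->
  hat chi psi = if chi == psi then #|G|%:R else 0.
Proof.
move=> cc cp; have [<-|ne] := eqVneq.
  rewrite /hat (eq_bigr (fun _ => 1)) ?sumr_const ?card_ord // => k _.
  by rewrite mulrC charN.
have [x0 hx0] : exists x0, chi x0 != psi x0.
  case: (classic (exists x0, chi x0 != psi x0)) => // h; exfalso.
  move/eqP: ne; apply; apply/ffunP=> x; apply/eqP; apply/negPn/negP=> hx.
  by apply: h; exists x.
set S := hat chi psi.
have e : S = chi x0 * psi (- x0) * S.
  rewrite /S /hat mulr_sumr (reindex_inj (addIr x0)) /=; apply: eq_bigr=> k _.
  rewrite cc.2 opprD cp.2; ring.
have n1 : chi x0 * psi (- x0) != 1.
  apply: contra hx0 => /eqP h; apply/eqP.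
  by rewrite -[chi x0]mulr1 -(charN x0 cp) mulrA h mul1r.
apply/eqP; move: e => /eqP; rewrite -subr_eq0 -{1}[S]mul1r -mulrBl mulf_eq0 subr_eq0.
by rewrite eq_sym (negPf n1).
Qed.

End Hat.

Section Key.
Variables (G : finZmodType) (L : closedFieldType).
Implicit Types (f u v d chi psi : {ffun G -> L}).

Lemma mulr_card (g : G) : g *+ #|G| = 0.
Proof.
have := @cyclic.expg_cardG _ (fingroup.setT_group (FinRing.Zmodule_to_finGroup G)) g (in_setT g).
by rewrite cardsT.
Qed.

Definition Pact (g : G) (P : {poly L}) v : {ffun G -> L} :=
  [ffun x => \sum_(i < size P) P`_i * v (x - g *+ i)].

Lemma Pact_wid g (P : {poly L}) v N : (size P <= N)%N ->
  Pact g P v = [ffun x => \sum_(i < N) P`_i * v (x - g *+ i)].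
Proof.
move=> hN; apply/ffunP=> x; rewrite !ffunE.
rewrite (big_ord_widen N (fun i => P`_i * v (x - g *+ i))) // big_mkcond /=.
apply: eq_bigr=> i _; case: ltnP => // h; by rewrite nth_default ?mul0r.
Qed.

Lemma Pact_XsubC g (w : L) (P : {poly L}) v :
  Pact g (('X - w%:P) * P) v = [ffun x => Pact g P v (x - g) - w * Pact g P v x].
Proof.
have hs : (size (('X - w%:P) * P)%R <= (size P).+1)%N.
  by apply: leq_trans (size_polyMleq _ _) _; rewrite size_XsubC.
rewrite (Pact_wid _ _ hs); apply/ffunP=> x; rewrite !ffunE.
under eq_bigr do rewrite mulrBl coefB coefXM coefCM mulrBl.
rewrite sumrB big_ord_recl /= mul0r add0r big_ord_recr /=.
rewrite [P`_(size P)]nth_default // mulr0 mul0r addr0 mulr_sumr.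
congr (_ - _); apply: eq_bigr=> i _.
  by rewrite /bump /= add1n mulrS opprD addrA.
by rewrite mulrA.
Qed.

Lemma Pact1 g v : Pact g 1 v = v.
Proof.
apply/ffunP=> x; rewrite ffunE size_poly1 big_ord_recl big_ord0 addr0 /=.
by rewrite coef1 /= mul1r mulr0n subr0.
Qed.

Lemma Pact_cyc g v : (0 < #|G|)%N -> Pact g ('X^#|G| - 1) v = 0.
Proof.
move=> n0; apply/ffunP=> x.
rewrite -polyC1 /Pact ffunE size_XnsubC // big_ord_recr /= ffunE.
rewrite coefB coefXn coefC eqxx mulr_card subr0 (negPf (lt0n_neq0 n0)) subr0 mul1r.
move: n0; case: #|G| => // n _.
rewrite big_ord_recl /= coefB coefXn coefC /= mulr0n sub0r mulN1r subr0.
rewrite big1 ?addr0 ?addNr // => i _.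
rewrite coefB coefXn coefC /=.
have -> : (bump 0 i == n.+1) = false.
  by apply/negbTE; rewrite neq_ltn; apply/orP; left; rewrite /bump /= add1n ltnS ltn_ord.
by rewrite subrr mul0r.
Qed.

Lemma Pact_closed (Q : {ffun G -> L} -> Prop) g :
  Q 0 -> (forall u1 u2, Q u1 -> Q u2 -> Q (u1 + u2)) ->
  (forall c u, Q u -> Q (sc c u)) -> (forall u, Q u -> Q (Tg g u)) ->
  forall P v, Q v -> Q (Pact g P v).
Proof.
move=> Q0 QD QZ QT P v Qv.
have it : forall i, iter i (Tg g) v = [ffun x => v (x - g *+ i)].
  elim=> [|i IH]; first by apply/ffunP=> x; rewrite ffunE mulr0n subr0.
  by apply/ffunP=> x; rewrite /= IH !ffunE mulrS opprD addrA.
have -> : Pact g P v = \sum_(i < size P) sc (P`_i) (iter i (Tg g) v).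
  by apply/ffunP=> x; rewrite ffunE sum_ffunE; apply: eq_bigr=> i _; rewrite ffunE it ffunE.
apply: (big_ind Q) => // i _; apply: QZ.
by elim: (nat_of_ord i) => //= n IH; apply: QT.
Qed.

Lemma chain (Q : {ffun G -> L} -> Prop) g :
  Q 0 -> (forall u1 u2, Q u1 -> Q u2 -> Q (u1 + u2)) ->
  (forall c u, Q u -> Q (sc c u)) -> (forall u, Q u -> Q (Tg g u)) ->
  forall rs v, Q v -> v != 0 -> Pact g (\prod_(w <- rs) ('X - w%:P)) v = 0 ->
  exists u w, [/\ Q u, u != 0 & Tg g u = sc w u].
Proof.
move=> Q0 QD QZ QT; elim=> [|w rs IH] v Qv nv.
  by rewrite big_nil Pact1 => h; rewrite h eqxx in nv.
rewrite big_cons Pact_XsubC => hu.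
have [u0|un0] := eqVneq (Pact g (\prod_(w <- rs) ('X - w%:P)) v) 0.
  exact: (IH v Qv nv u0).
exists (Pact g (\prod_(w <- rs) ('X - w%:P)) v), w; split=> //; first exact: Pact_closed.
apply/ffunP=> x; move/ffunP: hu => /(_ x); rewrite !ffunE => /eqP.
by rewrite subr_eq0 => /eqP.
Qed.

Lemma hat_T g v psi : is_character psi -> hat (Tg g v) psi = psi (- g) * hat v psi.
Proof.
move=> c; rewrite /hat mulr_sumr (reindex_inj (addIr g)) /=; apply: eq_bigr=> k _.
rewrite ffunE addrK opprD c.2; ring.
Qed.

Lemma hatD f u psi : hat (f + u) psi = hat f psi + hat u psi.
Proof. by rewrite /hat -big_split; apply: eq_bigr=> k _; rewrite ffunE mulrDl. Qed.

Lemma key d : (#|G|%:R : L) != 0 ->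
  (forall psi, is_character psi -> hat d psi = 0) -> d = 0.
Proof.
move=> nG Od; apply/eqP/negPn/negP=> nd.
pose Orth u := forall psi, is_character psi -> hat u psi = 0.
have n0 : (0 < #|G|)%N by rewrite lt0n; apply: contra nG => /eqP ->.
have claim : forall s : seq G, exists u (lam : G -> L),
    [/\ Orth u, u != 0 & forall h, h \in s -> Tg h u = sc (lam h) u].
  elim=> [|g s [u [lam [Ou nu Tu]]]]; first by exists d, (fun _ => 0).
  pose Q w := Orth w /\ forall h, h \in s -> Tg h w = sc (lam h) w.
  have [rs Hrs] := closed_field_poly_normal ('X^#|G| - 1 : {poly L}).
  have mon : 'X^#|G| - 1 \is @monic L by rewrite -polyC1 monicXnsubC.
  move: Hrs; rewrite (monicP mon) scale1r => Hrs.
  have := @chain Q g _ _ _ _ rs u.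
  case.
  - split; first by move=> psi _; rewrite hat0.
    by move=> h _; apply/ffunP=> x; rewrite !ffunE mulr0.
  - move=> u1 u2 [O1 T1] [O2 T2]; split; first by move=> psi c; rewrite hatD O1 // O2 // addr0.
    move=> h hs; apply/ffunP=> x; move/ffunP: (T1 h hs) => /(_ x); move/ffunP: (T2 h hs) => /(_ x).
    by rewrite !ffunE => -> ->; rewrite mulrDr.
  - move=> c w [O1 T1]; split; first by move=> psi cp; rewrite hatZ O1 // mulr0.
    move=> h hs; apply/ffunP=> x; move/ffunP: (T1 h hs) => /(_ x).
    by rewrite !ffunE => ->; rewrite mulrCA.
  - move=> w [O1 T1]; split; first by move=> psi cp; rewrite hat_T // O1 // mulr0.
    move=> h hs; apply/ffunP=> x; move/ffunP: (T1 h hs) => /(_ (x - g)).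
    by rewrite !ffunE addrAC => ->.
  - by split.
  - exact: nu.
  - by rewrite -Hrs Pact_cyc.
  move=> u' [w [[Ou' Tu'] nu' Tgu']].
  exists u', (fun h => if h == g then w else lam h); split=> // h.
  rewrite in_cons; case: eqP => [-> _ //|_ /= hs]; exact: Tu'.
have [u [lam [Ou nu Tu]]] := claim (enum G).
have e : forall h x, u (x - h) = lam h * u x.
  by move=> h x; move/ffunP: (Tu h (mem_enum _ h)) => /(_ x); rewrite !ffunE.
have ue : forall y, u y = lam (- y) * u 0.
  by move=> y; rewrite -e sub0r opprK.
have u0 : u 0 != 0.
  apply: contra nu => /eqP z; apply/eqP/ffunP=> y; by rewrite ue z mulr0 ffunE.
pose mu := sc (u 0)^-1 u.
have uD : forall y z, u (y + z) * u 0 = u y * u z.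
  move=> y z.
  have h1 : u (y + z) = lam (- z) * u y by rewrite -e opprK.
  have h2 : u z = lam (- z) * u 0 by rewrite -e sub0r opprK.
  rewrite h1 h2; ring.
have muD : forall y z, mu (y + z) = mu y * mu z.
  move=> y z; rewrite !ffunE; apply: (mulIf u0).
  have hb : u (y + z) = u y * u z / u 0 by rewrite -uD mulfK.
  rewrite hb; field; exact: u0.
have mu0 : mu 0 = 1 by rewrite ffunE mulVf.
have muc : is_character mu.
  split=> // x; apply/negP=> /eqP h.
  by have := muD x (- x); rewrite subrr mu0 h mul0r => /eqP; rewrite oner_eq0.
have := Ou mu muc; rewrite /hat.
have -> : \sum_k u k * mu (- k) = u 0 * #|G|%:R.
  rewrite mulr_natr -sumr_const; apply: eq_bigr=> k _.
  have -> : u k = u 0 * mu k by rewrite ffunE mulrA mulfV // mul1r.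
  by rewrite -mulrA -muD subrr mu0 mulr1.
by move/eqP; rewrite mulf_eq0 (negPf u0) (negPf nG).
Qed.

End Key.

From mathcomp Require Import zify.

Section Main.
Variables (K : finFieldType) (L : closedFieldType) (iota : {rmorphism K -> L}).
Variables (G : finZmodType) (p : nat).
Hypothesis pK : p \in [pchar K].
Hypothesis cop : coprime #|G| p.
Local Notation q := #|K|.
Implicit Types (v d chi psi : {ffun G -> L}).

Lemma pL : p \in [pchar L].
Proof. exact (rmorph_pchar iota pK). Qed.

Lemma prp : prime p.
Proof. exact: pcharf_prime pK. Qed.

Lemma nG : (#|G|%:R : L) != 0.
Proof.
rewrite -(dvdn_pcharf pL) -prime_coprime ?prp //; by rewrite coprime_sym.
Qed.

Lemma qpow : q = (p ^ logn p q)%N.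
Proof. exact: (card_pprimeChar pK). Qed.

Lemma q_gt0 : (0 < q)%N.
Proof. by rewrite qpow expn_gt0 prime_gt0 ?prp. Qed.

Lemma qnat : [pchar L].-nat q.
Proof. by rewrite qpow pnatX pnatE ?prp ?pL. Qed.

Lemma frobD (x y : L) : (x + y) ^+ q = x ^+ q + y ^+ q.
Proof. exact: exprDn_pchar qnat. Qed.

Lemma frob0 : (0 : L) ^+ q = 0.
Proof. by rewrite expr0n; case: eqP => // h; have := q_gt0; rewrite h. Qed.

Lemma frob_sum (I : Type) (r : seq I) (P : pred I) (F : I -> L) :
  (\sum_(i <- r | P i) F i) ^+ q = \sum_(i <- r | P i) F i ^+ q.
Proof. exact: (big_morph (fun x => x ^+ q) frobD frob0). Qed.

Lemma frob_iota (c : K) : iota c ^+ q = iota c.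
Proof. by rewrite -rmorphXn expf_card. Qed.

Lemma fpowE n (f : {ffun G -> L}) g : fpow n f g = f g ^+ n.
Proof. by rewrite ffunE. Qed.

Lemma fpowM m n (f : {ffun G -> L}) : fpow m (fpow n f) = fpow (n * m) f.
Proof. by apply/ffunP=> g; rewrite !ffunE exprM. Qed.

Lemma fpow1 (f : {ffun G -> L}) : fpow 1 f = f.
Proof. by apply/ffunP=> g; rewrite ffunE expr1. Qed.

Lemma fpow_char n chi : is_character chi -> is_character (fpow n chi).
Proof.
case=> nz m; split=> [x|x y]; rewrite !ffunE; first by rewrite expf_neq0.
by rewrite m exprMn.
Qed.

Lemma fpowD (f1 f2 : {ffun G -> L}) : fpow q (f1 + f2) = fpow q f1 + fpow q f2.
Proof. by apply/ffunP=> g; rewrite !ffunE frobD. Qed.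

Lemma fpow0 : fpow q (0 : {ffun G -> L}) = 0.
Proof. by apply/ffunP=> g; rewrite !ffunE frob0. Qed.

Lemma fpow_sum (I : Type) (r : seq I) (P : pred I) (F : I -> {ffun G -> L}) :
  fpow q (\sum_(i <- r | P i) F i) = \sum_(i <- r | P i) fpow q (F i).
Proof. exact: (big_morph (fpow q) fpowD fpow0). Qed.

Lemma embed_conv (f a : {ffun G -> K}) :
  embedF iota (conv f a) = conv (embedF iota f) (embedF iota a).
Proof.
apply/ffunP=> g; rewrite !ffunE rmorph_sum; apply: eq_bigr=> h _.
by rewrite rmorphM !ffunE.
Qed.

Lemma embed_inj (f1 f2 : {ffun G -> K}) : embedF iota f1 = embedF iota f2 -> f1 = f2.
Proof.
move=> e; apply/ffunP=> g; move/ffunP: e => /(_ g); rewrite !ffunE.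
exact: fmorph_inj.
Qed.

Lemma embed_sum (I : Type) (r : seq I) (P : pred I) (F : I -> {ffun G -> K}) :
  embedF iota (\sum_(i <- r | P i) F i) = \sum_(i <- r | P i) embedF iota (F i).
Proof.
apply/ffunP=> g; rewrite ffunE !sum_ffunE rmorph_sum; apply: eq_bigr=> i _.
by rewrite ffunE.
Qed.

Lemma embed0 : embedF iota (0 : {ffun G -> K}) = 0.
Proof. by apply/ffunP=> g; rewrite !ffunE rmorph0. Qed.

Lemma embedB (f1 f2 : {ffun G -> K}) :
  embedF iota (f1 - f2) = embedF iota f1 - embedF iota f2.
Proof. by apply/ffunP=> g; rewrite !ffunE rmorphB. Qed.

Lemma fpow_conv chi (a : {ffun G -> K}) :
  fpow q (conv chi (embedF iota a)) = conv (fpow q chi) (embedF iota a).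
Proof.
apply/ffunP=> g; rewrite !ffunE frob_sum; apply: eq_bigr=> h _.
by rewrite !ffunE exprMn frob_iota.
Qed.

Lemma harm_q t (a : 'I_t -> {ffun G -> K}) chi :
  harmonic iota a chi -> harmonic iota a (fpow q chi).
Proof.
case=> c h; split; first exact: fpow_char.
by move=> j; rewrite -fpow_conv h fpow0.
Qed.

Lemma harm_qk t (a : 'I_t -> {ffun G -> K}) chi k :
  harmonic iota a chi -> harmonic iota a (fpow (q ^ k) chi).
Proof.
move=> h; elim: k => [|k IH]; first by rewrite expn0 fpow1.
by rewrite expnSr -fpowM; apply: harm_q.
Qed.

Lemma char_mul chi g n : is_character chi -> chi (g *+ n) = chi g ^+ n.
Proof.
move=> c; elim: n => [|n IH]; first by rewrite mulr0n expr0 char0.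
by rewrite mulrS c.2 IH exprS.
Qed.

Lemma char_card chi g : is_character chi -> chi g ^+ #|G| = 1.
Proof. by move=> c; rewrite -char_mul // mulr_card char0. Qed.

Lemma char_modexp chi g k : is_character chi -> chi g ^+ k = chi g ^+ (k %% #|G|).
Proof.
move=> c; rewrite {1}(divn_eq k #|G|) exprD mulnC exprM char_card // expr1n mul1r.
by [].
Qed.

Lemma rdeg_ex chi : is_character chi -> exists r, rdeg_pred q chi r.
Proof.
move=> c; exists (totient #|G|); apply/andP; split.
  by rewrite totient_gt0; apply/card_gt0P; exists 0.
apply/eqP/ffunP=> g; rewrite ffunE char_modexp //.
have copq : coprime q #|G| by rewrite qpow coprimeXl // coprime_sym.
rewrite (cyclic.Euler_exp_totient copq) -char_modexp //.
Qed.

Lemma rdeg_spec chi : is_character chi ->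
  [/\ (0 < rdeg q chi)%N, fpow (q ^ rdeg q chi) chi = chi &
      forall r, (0 < r)%N -> fpow (q ^ r) chi = chi -> (rdeg q chi <= r)%N].
Proof.
move=> c; rewrite /rdeg; case: excluded_middle_informative => [e|ne]; last first.
  by case: ne; apply: rdeg_ex.
case: ex_minnP => m /andP [m0 /eqP Pm] mn; split=> // r r0 hr.
by apply: mn; apply/andP; split=> //; apply/eqP.
Qed.

Lemma fpow_add chi a b : fpow (q ^ (a + b)) chi = fpow (q ^ b) (fpow (q ^ a) chi).
Proof. by rewrite fpowM expnD. Qed.

Lemma fpow_rm chi m : is_character chi -> fpow (q ^ (rdeg q chi * m)) chi = chi.
Proof.
move=> c; have [r0 hr _] := rdeg_spec c.
elim: m => [|m IH]; first by rewrite muln0 expn0 fpow1.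
by rewrite mulnS fpow_add hr IH.
Qed.

Lemma fpow_mod chi k : is_character chi ->
  fpow (q ^ k) chi = fpow (q ^ (k %% rdeg q chi)) chi.
Proof.
move=> c; rewrite {1}(divn_eq k (rdeg q chi)) fpow_add mulnC fpow_rm //.
Qed.

Lemma fpow_distinct chi i j : is_character chi -> (i < rdeg q chi)%N -> (j < rdeg q chi)%N ->
  fpow (q ^ i) chi = fpow (q ^ j) chi -> i = j.
Proof.
move=> c; have [r0 hr mn] := rdeg_spec c; set r := rdeg q chi in r0 hr mn *.
wlog lij : i j / (i <= j)%N.
  move=> W hi hj e; case: (leqP i j) => l; first exact: W.
  by symmetry; apply: W => //; apply: ltnW.
move=> hi hj e; case: (ltnP i j) => l; last by apply/eqP; rewrite eqn_leq lij l.
have : fpow (q ^ (i + (r - j))) chi = chi.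
  by rewrite fpow_add e -fpow_add subnKC ?hr // ltnW.
move/(mn _ _) => h; exfalso.
have : (r <= i + (r - j))%N by apply: h; lia.
lia.
Qed.

Lemma so_refl chi : same_orbit q chi chi.
Proof. by exists 0%N; rewrite expn0 fpow1. Qed.

Lemma so_trans (a b c : {ffun G -> L}) : same_orbit q a b -> same_orbit q b c -> same_orbit q a c.
Proof. by case=> k -> [l ->]; exists (k + l)%N; rewrite fpow_add. Qed.

Lemma so_sym (a b : {ffun G -> L}) : is_character a -> same_orbit q a b -> same_orbit q b a.
Proof.
move=> c [k ->]; have [r0 _ _] := rdeg_spec c.
exists (rdeg q a * k - k)%N; rewrite -fpow_add subnKC ?fpow_rm //.
by rewrite leq_pmull.
Qed.

Lemma so_char (a b : {ffun G -> L}) : is_character a -> same_orbit q a b -> is_character b.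
Proof. by move=> c [k ->]; apply: fpow_char. Qed.

Lemma so_lt chi psi : is_character chi -> same_orbit q chi psi ->
  exists2 i, (i < rdeg q chi)%N & psi = fpow (q ^ i) chi.
Proof.
move=> c [k ->]; have [r0 _ _] := rdeg_spec c.
by exists (k %% rdeg q chi)%N; [rewrite ltn_pmod | rewrite -fpow_mod].
Qed.

Lemma hatTr_in chi psi : is_character chi -> same_orbit q chi psi ->
  hat (Tr q chi) psi = #|G|%:R.
Proof.
move=> c so; have cp := so_char c so; have [i0 hi0 e] := so_lt c so.
rewrite /Tr hat_sum (bigD1 (Ordinal hi0)) // hat_char ?fpow_char //=.
have -> : (fpow (q ^ i0) chi == psi) = true by rewrite e eqxx.
rewrite big1 ?addr0 // => i ni; rewrite hat_char ?fpow_char //.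
case: eqP => // h; exfalso; move/negP: ni; apply; apply/eqP/val_inj => /=.
by apply: (fpow_distinct c) => //; rewrite h e.
all: exact: fpow_char.
Qed.

Lemma hatTr_out chi psi : is_character chi -> is_character psi -> ~ same_orbit q chi psi ->
  hat (Tr q chi) psi = 0.
Proof.
move=> c cp nso; rewrite /Tr hat_sum big1 // => i _; rewrite hat_char //.
  by case: eqP => // h; case: nso; exists i.
exact: fpow_char.
Qed.

Lemma fpow_q_Tr chi : is_character chi -> fpow q (Tr q chi) = Tr q chi.
Proof.
move=> c; have [r0 hr _] := rdeg_spec c; rewrite /Tr fpow_sum.
under eq_bigr do rewrite fpowM -expnSr.
move: r0 hr; case: (rdeg q chi) => // r _ hr.
rewrite big_ord_recr big_ord_recl /= hr expn0 fpow1 addrC; congr (_ + _).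
Qed.

Lemma Tr_in_K chi g : is_character chi -> exists k, iota k = Tr q chi g.
Proof.
move=> c; set y := Tr q chi g.
have hy : y ^+ q = y by rewrite /y -fpowE fpow_q_Tr.
have := congr1 (map_poly iota) (finField_genPoly K).
rewrite rmorphB /= map_polyXn map_polyX rmorph_prod /=.
under eq_bigr do rewrite map_polyXsubC.
move/(congr1 (fun P => P.[y])); rewrite horner_prod !hornerE hy subrr.
move/esym/eqP/prodf_eq0 => [k _]; rewrite hornerXsubC subr_eq0 => /eqP ->.
by exists k.
Qed.

Lemma descendK chi : is_character chi ->
  embedF iota (descend iota (Tr q chi)) = Tr q chi.
Proof.
move=> c; apply/ffunP=> g; rewrite !ffunE.
case: pickP => [k /eqP //| none]; have [k hk] := Tr_in_K g c.
by have := none k; rewrite hk eqxx.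
Qed.

Lemma harm_hat t (a : 'I_t -> {ffun G -> K}) chi j :
  harmonic iota a chi -> hat (embedF iota (a j)) chi = 0.
Proof.
case=> c h; have := h j; rewrite convC conv_char // => /ffunP /(_ 0).
by rewrite !ffunE char0 // mul1r.
Qed.

Lemma nonharm t (a : 'I_t -> {ffun G -> K}) psi :
  is_character psi -> ~ harmonic iota a psi -> exists j, hat (embedF iota (a j)) psi != 0.
Proof.
move=> c nh; apply: NNPP => ne; apply: nh; split=> // j.
rewrite convC conv_char //; apply/ffunP=> g; rewrite !ffunE.
case: (eqVneq (hat (embedF iota (a j)) psi) 0) => [->|h]; first by rewrite mulr0.
by case: ne; exists j.
Qed.


Lemma embed_scale (c : K) (f : {ffun G -> K}) :
  embedF iota [ffun x => c * f x] = sc (iota c) (embedF iota f).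
Proof. by apply/ffunP=> x; rewrite !ffunE rmorphM. Qed.

Lemma main_sec t (a : 'I_t -> {ffun G -> K}) :
  [/\ (forall chi : {ffun G -> L}, harmonic iota a chi -> harmonic iota a (fpow q chi)),
      (forall chi : {ffun G -> L}, harmonic iota a chi ->
         embedF iota (descend iota (Tr q chi)) = Tr q chi),
      (forall chi1 chi2 : {ffun G -> L}, harmonic iota a chi1 -> harmonic iota a chi2 ->
         (Tr q chi1 = Tr q chi2 <-> same_orbit q chi1 chi2)),
      (forall (m : nat) (chis : 'I_m -> {ffun G -> L}),
         (forall i, harmonic iota a (chis i)) ->
         (forall chi : {ffun G -> L}, harmonic iota a chi -> exists i, same_orbit q (chis i) chi) ->
         (forall i j, same_orbit q (chis i) (chis j) -> i = j) ->
         let hs := fun i => descend iota (Tr q (chis i)) in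
         [/\ (forall i f, in_ideal (hs i) f -> in_ker a f),
             (forall f, in_ker a f ->
                exists2 fs : 'I_m -> {ffun G -> K},
                  (forall i, in_ideal (hs i) (fs i)) & f = \sum_(i < m) fs i),
             (forall fs : 'I_m -> {ffun G -> K},
                (forall i, in_ideal (hs i) (fs i)) -> \sum_(i < m) fs i = 0 ->
                forall i, fs i = 0)
           & (forall i j, i != j -> forall f1 f2,
                in_ideal (hs i) f1 -> in_ideal (hs j) f2 -> form1 f1 f2 = 0)])
    & (forall chi : {ffun G -> L}, is_character chi -> forall x : G,
         chi x = (#|G|%:R)^-1 * \sum_(g : G) chi (- g) * Tr q chi (g + x))].
Proof.
have nGL := nG.
split.
- exact: harm_q.
- by move=> chi [c _]; apply: descendK.
- move=> chi1 chi2 [c1 _] [c2 _]; split.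
    move=> e; apply: NNPP => nso; have := hatTr_out c1 c2 nso.
    by rewrite e (hatTr_in c2 (so_refl chi2)) => h; rewrite h eqxx in nGL.
  move=> so; apply/eqP; rewrite -subr_eq0; apply/eqP; apply: (key nG) => psi cp.
  rewrite hatB; case: (classic (same_orbit q chi1 psi)) => h.
    by rewrite hatTr_in // hatTr_in // ?subrr //; apply: so_trans (so_sym c1 so) h.
  rewrite !hatTr_out // ?subrr // => h2; apply: h; exact: so_trans so h2.
- move=> m chis Hh Hcov Hdist hs.
  have ci : forall i, is_character (chis i) by move=> i; case: (Hh i).
  have hE : forall i, embedF iota (hs i) = Tr q (chis i) by move=> i; apply: descendK.
  have uniq : forall psi i j, same_orbit q (chis i) psi -> same_orbit q (chis j) psi -> i = j.
    move=> psi i j hi hj; apply: Hdist; apply: so_trans hi _.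
    by apply: so_sym => //; apply: so_char hj.
  have hatI : forall i (u : {ffun G -> K}) psi, is_character psi ->
      hat (embedF iota (conv (hs i) u)) psi = hat (Tr q (chis i)) psi * hat (embedF iota u) psi.
    by move=> i u psi cp; rewrite embed_conv hat_conv // hE.
  have idout : forall i (f : {ffun G -> K}) psi, is_character psi -> in_ideal (hs i) f ->
      ~ same_orbit q (chis i) psi -> hat (embedF iota f) psi = 0.
    by move=> i f psi cp [u ->] nso; rewrite hatI // hatTr_out // mul0r.
  split.
  + move=> i f [u ->] j; apply: embed_inj; rewrite embed0 embed_conv.
    apply: (key nG) => psi cp; rewrite hat_conv // hatI //.
    case: (classic (same_orbit q (chis i) psi)) => h; last by rewrite hatTr_out // !mul0r.
    case: h => k e; have hp : harmonic iota a psi by rewrite e; apply: harm_qk.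
    by rewrite (harm_hat j hp) mulr0.
  + move=> f fk; exists (fun i => conv (hs i) [ffun x => (#|G|%:R)^-1 * f x]).
      by move=> i; eexists.
    apply: embed_inj; apply/eqP; rewrite -subr_eq0; apply/eqP.
    apply: (key nG) => psi cp; rewrite hatB embed_sum hat_sum.
    under eq_bigr do rewrite hatI // embed_scale hatZ fmorphV rmorph_nat.
    case: (classic (harmonic iota a psi)) => hp.
      have [i0 so0] := Hcov psi hp.
      rewrite (bigD1 i0) //= hatTr_in // big1 ?addr0.
        rewrite mulVKf; [exact: addrN | exact: nG].
      move=> i ni.
      rewrite hatTr_out // ?mul0r // => so; move/negP: ni; apply; apply/eqP.
      exact: uniq so so0.
    have [j hj] := nonharm cp hp.
    have hf : hat (embedF iota f) psi = 0.
      have := congr1 (fun h => hat h psi) (congr1 (embedF iota) (fk j)).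
      rewrite /= embed_conv hat_conv // embed0 hat0 => /eqP.
      by rewrite mulf_eq0 (negPf hj) orbF => /eqP.
    by rewrite hf big1 ?subr0 // => i _; rewrite !mulr0.
  + move=> fs Hfs Hsum i0; apply: embed_inj; rewrite embed0.
    apply: (key nG) => psi cp.
    case: (classic (same_orbit q (chis i0) psi)) => h; last exact: idout (Hfs i0) h.
    have := congr1 (fun h => hat h psi) (congr1 (embedF iota) Hsum).
    rewrite /= embed_sum hat_sum embed0 hat0 (bigD1 i0) //= big1 ?addr0 // => i ni.
    apply: idout (Hfs i) _ => // so; move/negP: ni; apply; apply/eqP; exact: uniq so h.
  + move=> i j nij f1 f2 h1 h2; rewrite /form1.
    suff hc : conv f1 f2 = 0.
      move/ffunP: hc => /(_ 0); rewrite convE ffunE.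
      by under eq_bigr do rewrite sub0r; move=> ->; rewrite mulr0.
    apply: embed_inj; rewrite embed0 embed_conv.
    apply: (key nG) => psi cp; rewrite hat_conv //.
    case: (classic (same_orbit q (chis i) psi)) => h.
      rewrite (idout j f2 psi) ?mulr0 // => so; move/eqP: nij; apply; exact: uniq h so.
    by rewrite (idout i f1 psi) ?mul0r.
- move=> chi c x.
  have -> : \sum_(g : G) chi (- g) * Tr q chi (g + x) = conv (Tr q chi) chi x.
    rewrite convE [RHS](reindex_inj (addIr x)) /=; apply: eq_bigr=> g _.
    by rewrite opprD addrCA subrr addr0 mulrC.
  by rewrite conv_char // ffunE (hatTr_in c (so_refl chi)) mulrC mulfK.
Qed.

End Main.

Theorem proposition4p3 (K : finFieldType) (p : nat) (L : closedFieldType)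
  (iota : {rmorphism K -> L}) (G : finZmodType) (t : nat)
  (a : 'I_t -> {ffun G -> K}) :
  p \in [pchar K] ->
  (forall x : L, exists2 P : {poly K}, P != 0 & root (map_poly iota P) x) ->
  coprime #|G| p ->
  let q := #|K| in
  [/\ (* H is stable under chi |-> chi^q *)
      (forall chi : {ffun G -> L}, harmonic iota a chi -> harmonic iota a (fpow q chi)),
      (* (a) traces of harmonic characters lie in F(G,K) *)
      (forall chi : {ffun G -> L}, harmonic iota a chi ->
         embedF iota (descend iota (Tr q chi)) = Tr q chi),
      (* (a) orbit |-> trace is a well-defined bijection onto the set of traces *)
      (forall chi1 chi2 : {ffun G -> L}, harmonic iota a chi1 -> harmonic iota a chi2 ->
         (Tr q chi1 = Tr q chi2 <-> same_orbit q chi1 chi2)),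
      (* (b) orthogonal direct sum decomposition of ker(Delta_abar) *)
      (forall (m : nat) (chis : 'I_m -> {ffun G -> L}),
         (forall i, harmonic iota a (chis i)) ->
         (forall chi : {ffun G -> L}, harmonic iota a chi -> exists i, same_orbit q (chis i) chi) ->
         (forall i j, same_orbit q (chis i) (chis j) -> i = j) ->
         let hs := fun i => descend iota (Tr q (chis i)) in
         [/\ (forall i f, in_ideal (hs i) f -> in_ker a f),
             (forall f, in_ker a f ->
                exists2 fs : 'I_m -> {ffun G -> K},
                  (forall i, in_ideal (hs i) (fs i)) & f = \sum_(i < m) fs i),
             (forall fs : 'I_m -> {ffun G -> K},
                (forall i, in_ideal (hs i) (fs i)) -> \sum_(i < m) fs i = 0 ->
                forall i, fs i = 0)
           & (forall i j, i != j -> forall f1 f2,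
                in_ideal (hs i) f1 -> in_ideal (hs j) f2 -> form1 f1 f2 = 0)])
    & (* (c) *)
      (forall chi : {ffun G -> L}, is_character chi -> forall x : G,
         chi x = (#|G|%:R)^-1 * \sum_(g : G) chi (- g) * Tr q chi (g + x))].
Proof.
move=> pK _ cop; exact: (main_sec iota pK cop a).
Qed.
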